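(* Let $A\in\mathbb{R}^{m\times n}$, let $a=\max_{i,j}|A_{i,j}|$, and let $(U,V)$ be an iterative play system for $A$. Let $s,t\ge 0$ be integers and suppose that every row index $i\in\{1,\dots,m\}$ and every column index $j\in\{1,\dots,n\}$ is $E$-eligible in the interval $[s,s+t]$. Then $$\max U(s+t)-\min U(s+t)\le 2a(t+1)\quad\text{and}\quad \max V(s+t)-\min V(s+t)\le 2a(t+1).$$
   Context: An iterative play system $(U,V)$ for $A\in\mathbb{R}^{m\times n}$ is a pair of sequences $U(0),U(1),\dots\in\mathbb{R}^n$ and $V(0),V(1),\dots\in\mathbb{R}^m$ such that $\min U(0)=\max V(0)$ and, for each $t$, $U(t+1)=U(t)+A_{i(t),*}$ and $V(t+1)=V(t)+A_{*,j(t)}$ for some indices $i(t)\in\{1,\dots,m\}$, $j(t)\in\{1,\dots,n\}$, where $A_{i,*}$ is the $i$th row and $A_{*,j}$ the $j$th column of $A$. Write $u_j(t)$, $v_i(t)$ for the entries of $U(t)$, $V(t)$, and $\max$, $\min$ of a vector for its largest/smallest entry. With $a=\max_{i,j}|A_{i,j}|$, row $i$ is $E$-eligible in $[t,t']$ if there exists an integer $t_1\in[t,t']$ with $v_i(t_1)\ge\max V(t_1)-2a$; column $j$ is $E$-eligible in $[t,t']$ if there exists $t_1\in[t,t']$ with $u_j(t_1)\le\min U(t_1)+2a$. *)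

(* Defs.v *)
From mathcomp Require Import all_boot all_order all_algebra.
Set Implicit Arguments. Unset Strict Implicit. Unset Printing Implicit Defensive.
Import Order.TTheory GRing.Theory Num.Theory.
Local Open Scope ring_scope.

(* Indices are 0-based ordinals: rows 'I_m.+1, columns 'I_n.+1 (so m+1 >= 1 rows,
   n+1 >= 1 columns, as needed for max/min of vectors to make sense). *)

Definition vmax (R : realDomainType) (k : nat) (v : 'I_k.+1 -> R) : R :=
  \big[Num.max/v ord0]_(x < k.+1) v x.
Definition vmin (R : realDomainType) (k : nat) (v : 'I_k.+1 -> R) : R :=
  \big[Num.min/v ord0]_(x < k.+1) v x.

Definition amax (R : realDomainType) (m n : nat) (A : 'M[R]_(m.+1, n.+1)) : R :=
  \big[Num.max/0]_(i < m.+1) \big[Num.max/0]_(j < n.+1) `|A i j|.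

Definition iterative_play_system (R : realDomainType) (m n : nat)
    (A : 'M[R]_(m.+1, n.+1)) (U : nat -> 'I_n.+1 -> R) (V : nat -> 'I_m.+1 -> R) : Prop :=
  vmin (U 0%N) = vmax (V 0%N) /\
  exists (it : nat -> 'I_m.+1) (jt : nat -> 'I_n.+1),
    forall t : nat,
      (forall j, U t.+1 j = U t j + A (it t) j) /\
      (forall i, V t.+1 i = V t i + A i (jt t)).

Definition row_E_eligible (R : realDomainType) (m n : nat)
    (A : 'M[R]_(m.+1, n.+1)) (V : nat -> 'I_m.+1 -> R) (i : 'I_m.+1) (t t' : nat) : Prop :=
  exists t1 : nat, (t <= t1 <= t')%N /\ vmax (V t1) - 2 * amax A <= V t1 i.

Definition col_E_eligible (R : realDomainType) (m n : nat)
    (A : 'M[R]_(m.+1, n.+1)) (U : nat -> 'I_n.+1 -> R) (j : 'I_n.+1) (t t' : nat) : Prop :=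
  exists t1 : nat, (t <= t1 <= t')%N /\ U t1 j <= vmin (U t1) + 2 * amax A.

(* Main.v *)
Require Import Defs.
From mathcomp Require Import all_boot all_order all_algebra.
From mathcomp Require Import reals.
From mathcomp Require Import lra zify.
Import Order.TTheory GRing.Theory Num.Theory.
Local Open Scope ring_scope.

Lemma le_bigmax_gen (R : realDomainType) (I : eqType) (f : I -> R) y0 (r : seq I) x :
  x \in r -> f x <= \big[Num.max/y0]_(i <- r) f i.
Proof.
elim: r => [|y r IH] //; rewrite in_cons big_cons le_max => /orP [/eqP->|/IH->].
  by rewrite lexx.
by rewrite orbT.
Qed.

Lemma ge_bigmin_gen (R : realDomainType) (I : eqType) (f : I -> R) y0 (r : seq I) x :
  x \in r -> \big[Num.min/y0]_(i <- r) f i <= f x.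
Proof.
elim: r => [|y r IH] //; rewrite in_cons big_cons ge_min => /orP [/eqP->|/IH->].
  by rewrite lexx.
by rewrite orbT.
Qed.

Lemma vmax_ge (R : realDomainType) k (v : 'I_k.+1 -> R) x : v x <= vmax v.
Proof. by apply: le_bigmax_gen; rewrite mem_index_enum. Qed.

Lemma vmin_le (R : realDomainType) k (v : 'I_k.+1 -> R) x : vmin v <= v x.
Proof. by apply: ge_bigmin_gen; rewrite mem_index_enum. Qed.

Lemma vmax_le (R : realDomainType) k (v : 'I_k.+1 -> R) c :
  (forall x, v x <= c) -> vmax v <= c.
Proof.
move=> H; rewrite /vmax; apply: (big_ind (fun y => y <= c)) => //.
by move=> a b ha hb; rewrite ge_max ha hb.
Qed.

Lemma vmin_ge (R : realDomainType) k (v : 'I_k.+1 -> R) c :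
  (forall x, c <= v x) -> c <= vmin v.
Proof.
move=> H; rewrite /vmin; apply: (big_ind (fun y => c <= y)) => //.
by move=> a b ha hb; rewrite le_min ha hb.
Qed.

Lemma amax_ge (R : realDomainType) m n (A : 'M[R]_(m.+1, n.+1)) i j :
  `|A i j| <= amax A.
Proof.
have h1 := @le_bigmax_gen _ _ (fun j0 => `|A i j0|) 0 _ _ (mem_index_enum j).
have h2 := @le_bigmax_gen _ _ (fun i0 => \big[Num.max/0]_(j0 < n.+1) `|A i0 j0|) 0 _ _ (mem_index_enum i).
rewrite /amax; apply: (le_trans h1); exact h2.
Qed.

Lemma amax_ge0 (R : realDomainType) m n (A : 'M[R]_(m.+1, n.+1)) : 0 <= amax A.
Proof. have h := @amax_ge _ _ _ A ord0 ord0; exact: le_trans (normr_ge0 _) h. Qed.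

Lemma entry_bd (R : realDomainType) m n (A : 'M[R]_(m.+1, n.+1)) i j :
  - amax A <= A i j <= amax A.
Proof. by rewrite -ler_norml amax_ge. Qed.

Theorem lemma2 (R : realType) (m n : nat) (A : 'M[R]_(m.+1, n.+1))
    (U : nat -> 'I_n.+1 -> R) (V : nat -> 'I_m.+1 -> R) (s t : nat) :
  iterative_play_system A U V ->
  (forall i : 'I_m.+1, row_E_eligible A V i s (s + t)) ->
  (forall j : 'I_n.+1, col_E_eligible A U j s (s + t)) ->
  vmax (U (s + t)%N) - vmin (U (s + t)%N) <= 2 * amax A * (t.+1)%:R /\
  vmax (V (s + t)%N) - vmin (V (s + t)%N) <= 2 * amax A * (t.+1)%:R.
Proof.
move=> [_ [it [jt Hs]]] HV HU.
set a := amax A.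
have a0 : 0 <= a := @amax_ge0 _ _ _ A.
have BU : forall t0 d j, U t0 j - a * d%:R <= U (t0 + d)%N j <= U t0 j + a * d%:R.
  move=> t0; elim=> [|d IH] j; first by rewrite addn0 mulr0 subr0 addr0 lexx.
  rewrite addnS (proj1 (Hs _)) mulrSr mulrDr mulr1.
  have /andP[h1 h2] := @entry_bd _ _ _ A (it (t0 + d)%N) j.
  have /andP[h3 h4] := IH j.
  rewrite -/a in h1 h2; apply/andP; split; lra.
have BV : forall t0 d i, V t0 i - a * d%:R <= V (t0 + d)%N i <= V t0 i + a * d%:R.
  move=> t0; elim=> [|d IH] i; first by rewrite addn0 mulr0 subr0 addr0 lexx.
  rewrite addnS (proj2 (Hs _)) mulrSr mulrDr mulr1.
  have /andP[h1 h2] := @entry_bd _ _ _ A i (jt (t0 + d)%N).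
  have /andP[h3 h4] := IH i.
  rewrite -/a in h1 h2; apply/andP; split; lra.
have dle : forall t1, (s <= t1 <= s + t)%N ->
    exists d, (s + t = t1 + d)%N /\ d%:R <= t%:R :> R.
  move=> t1 /andP[h1 h2]; exists (s + t - t1)%N; split; first by rewrite subnKC.
  by rewrite ler_nat; lia.
have tS : (t.+1)%:R = t%:R + 1 :> R by rewrite mulrSr.
split.
- suff : vmax (U (s + t)%N) <= vmin (U (s + t)%N) + 2 * a * (t.+1)%:R by lra.
  apply: vmax_le => j.
  have [t1 [ht1 Hj]] := HU j.
  have [d [-> hd]] := dle t1 ht1.
  rewrite -/a in Hj.
  have /andP[_ h2] := BU t1 d j.
  have hm : vmin (U t1) - a * d%:R <= vmin (U (t1 + d)%N).
    apply: vmin_ge => j'.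
    have := @vmin_le _ _ (U t1) j'; have /andP[h3 _] := BU t1 d j'; lra.
  rewrite tS.
  have : a * d%:R <= a * t%:R by apply: ler_wpM2l.
  lra.
- suff : vmax (V (s + t)%N) - 2 * a * (t.+1)%:R <= vmin (V (s + t)%N) by lra.
  apply: vmin_ge => i.
  have [t1 [ht1 Hi]] := HV i.
  have [d [-> hd]] := dle t1 ht1.
  rewrite -/a in Hi.
  have /andP[h1 _] := BV t1 d i.
  have hm : vmax (V (t1 + d)%N) <= vmax (V t1) + a * d%:R.
    apply: vmax_le => i'.
    have := @vmax_ge _ _ (V t1) i'; have /andP[_ h3] := BV t1 d i'; lra.
  rewrite tS.
  have : a * d%:R <= a * t%:R by apply: ler_wpM2l.
  lra.
Qed.
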